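(* Let $G$ be a bipartite cubic graph and let $C = v_1v_2\cdots v_tv_1$ be a cycle in $G$ with $t \ge 6$. Then $V(C)$ can be partitioned into at most $\frac{t}{3}$ sets $W_1,\dots,W_m$ (so $m \le t/3$) such that each $G[W_j]$ is a path with at least $2$ vertices.
   Context: All graphs are finite and simple; cubic means $3$-regular. $G[W]$ denotes the subgraph of $G$ induced on the vertex set $W$. *)

(* Defs.v *)
From mathcomp Require Import all_boot.
Set Implicit Arguments. Unset Strict Implicit. Unset Printing Implicit Defensive.

Definition simple_graph (T : finType) (e : rel T) : Prop :=
  symmetric e /\ irreflexive e.

Definition cubic (T : finType) (e : rel T) : Prop :=
  forall x : T, #|[set y | e x y]| = 3.

Definition bipartite (T : finType) (e : rel T) : Prop :=
  exists c : T -> bool, forall x y, e x y -> c x != c y.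

Definition induced_path (T : finType) (e : rel T) (W : {set T}) : Prop :=
  exists s : seq T,
    [/\ uniq s, W = [set x in s] &
        forall i j, i < size s -> j < size s ->
          forall x0 : T, e (nth x0 s i) (nth x0 s j) = (i.+1 == j) || (j.+1 == i)].

(* Main.v *)
Require Import Defs.
From mathcomp Require Import all_boot zify.
Set Implicit Arguments. Unset Strict Implicit. Unset Printing Implicit Defensive.

Fixpoint chunk (T : Type) (l n : nat) (u : seq T) : seq (seq T) :=
  if n is n'.+1 then take l u :: chunk l n' (drop l u) else [::].

Lemma flatten_chunk (T : Type) l n (u : seq T) : flatten (chunk l n u) = take (l * n) u.
Proof.
elim: n u => [|n IH] u /=; first by rewrite muln0 take0.
by rewrite IH mulnS takeD.
Qed.

Lemma size_chunk (T : Type) l n (u : seq T) : size (chunk l n u) = n.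
Proof. by elim: n u => [|n IH] u //=; rewrite IH. Qed.

Lemma mem_chunk (T : eqType) l n (u : seq T) b :
  b \in chunk l n u -> exists2 m, m < n & b = take l (drop (l * m) u).
Proof.
elim: n u => [|n IH] u //=; rewrite inE => /orP [/eqP ->|].
  by exists 0 => //; rewrite muln0 drop0.
case/IH => m Hm ->; exists m.+1 => //.
by rewrite drop_drop mulnS addnC.
Qed.

Fixpoint Pof (T : finType) (bs : seq (seq T)) : {set {set T}} :=
  if bs is b :: bs' then [set x in b] |: Pof bs' else set0.

Lemma mem_Pof (T : finType) (bs : seq (seq T)) W :
  W \in Pof bs -> exists2 b, b \in bs & W = [set x in b].
Proof.
elim: bs => [|b bs IH] /=; first by rewrite inE.
rewrite in_setU1 => /orP [/eqP ->|]; first by exists b; rewrite ?inE ?eqxx.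
by case/IH => b' Hb' ->; exists b'; rewrite // inE Hb' orbT.
Qed.

Lemma Pof_props (T : finType) (bs : seq (seq T)) :
  uniq (flatten bs) -> (forall b, b \in bs -> [set x in b] != set0) ->
  [/\ cover (Pof bs) = [set x in flatten bs], trivIset (Pof bs),
      set0 \notin Pof bs & #|Pof bs| <= size bs].
Proof.
elim: bs => [|b bs IH] /=.
  move=> _ _; split => //; last by rewrite cards0.
  - by apply/setP => x; rewrite /cover big_set0 !inE.
  - by apply/trivIsetP => A B; rewrite inE.
  - by rewrite inE.
rewrite cat_uniq => /and3P [Ub Hdis Ubs] Hne.
have [Hc Ht H0 Hcard] := IH Ubs (fun b1 Hb1 => Hne b1 (introT orP (or_intror Hb1))).
have Hdj : {in Pof bs, forall B : {set T}, [disjoint [set x in b] & B]}.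
  move=> B /mem_Pof [b' Hb' ->].
  rewrite -setI_eq0; apply/eqP/setP => x; rewrite !inE.
  apply/negbTE/negP => /andP [Hx Hx'].
  have Hf : x \in flatten bs by apply/flattenP; exists b'.
  by move/hasPn: Hdis => /(_ x Hf); rewrite /= Hx.
have [Ht' Hnot] := trivIsetU1 Hdj Ht H0.
split => //.
- rewrite /cover big_setU1 //= -/(cover _) Hc.
  by apply/setP => x; rewrite !inE mem_cat.
- rewrite in_setU1 negb_or H0 andbT eq_sym.
  by apply: Hne; rewrite inE eqxx.
- by rewrite cardsU1 Hnot add1n.
Qed.

Lemma blocks_partition (T : finType) (e : rel T) (s : seq T) (bs : seq (seq T)) :
  uniq s -> flatten bs = s ->
  (forall b, b \in bs -> 2 <= #|[set x in b]| /\ induced_path e [set x in b]) ->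
  exists P : {set {set T}},
    [/\ partition P [set x in s], #|P| <= size bs &
        forall W, W \in P -> 2 <= #|W| /\ induced_path e W].
Proof.
move=> Us Hf Hb.
have Hne : forall b, b \in bs -> [set x in b] != set0.
  move=> b /Hb [H2 _]; apply/eqP => H; move: H2; by rewrite H cards0.
rewrite -Hf in Us.
have [Hc Ht H0 Hcard] := Pof_props Us Hne.
exists (Pof bs); split => //.
  by rewrite /partition Hc Hf eqxx Ht H0.
by move=> W /mem_Pof [b Hbb ->]; apply: Hb.
Qed.

Lemma segment_ok (T : finType) (e : rel T) (x0 : T) (s : seq T) a l :
  symmetric e -> irreflexive e -> uniq s ->
  (forall k, k.+1 < size s -> e (nth x0 s k) (nth x0 s k.+1)) ->
  (forall k, k + 2 < size s -> e (nth x0 s k) (nth x0 s (k + 2)) = false) ->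
  a + l <= size s -> 2 <= l <= 4 ->
  (l = 4 -> e (nth x0 s a) (nth x0 s (a + 3)) = false) ->
  2 <= #|[set x in take l (drop a s)]| /\ induced_path e [set x in take l (drop a s)].
Proof.
move=> Hsym Hirr Us Hedge Hpar Hal Hl H3.
have Ub : uniq (take l (drop a s)) by apply: take_uniq; apply: drop_uniq.
have Hsz : size (take l (drop a s)) = l by rewrite size_takel // size_drop; lia.
split.
  by rewrite cardsE (card_uniqP Ub) Hsz; lia.
exists (take l (drop a s)); split => //.
rewrite Hsz => i j Hi Hj y0.
rewrite !nth_take // !nth_drop.
rewrite (@set_nth_default _ _ x0 y0 (a + i)); last lia.
rewrite (@set_nth_default _ _ x0 y0 (a + j)); last lia.
wlog Hij : i j Hi Hj / i <= j.
  move=> W; case: (leqP i j) => H; first by apply: W.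
  by rewrite Hsym orbC; apply: (W j i Hj Hi (ltnW H)).
have [d Ed] : exists d, j = i + d by exists (j - i); lia.
subst j.
have Hd : d < 4 by lia.
case: d Hd Hj {Hij} => [|[|[|[|d]]]] // _ Hj.
- rewrite addn0 Hirr; apply/esym/negbTE; lia.
- rewrite addn1 addnS Hedge; last lia.
  by rewrite eqxx.
- rewrite addnA Hpar; last lia.
  apply/esym/negbTE; lia.
- have Hi0 : i = 0 by lia.
  subst i; rewrite addn0 /= H3 //; lia.
Qed.

Lemma cycle_nth (T : eqType) (e : rel T) x0 (C : seq T) :
  cycle e C -> forall i, i < size C ->
  e (nth x0 C i) (nth x0 C (i.+1 %% size C)).
Proof.
case: C => [|x p] //= /(pathP x0) Hc i Hi.
have := Hc i; rewrite size_rcons => /(_ Hi).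
rewrite -rcons_cons nth_rcons /= Hi nth_rcons.
case: (ltnP i (size p)) => H.
  by rewrite modn_small.
have -> : i = size p by lia.
by rewrite eqxx modnn.
Qed.

Lemma nth_rot_mod (T : Type) x0 (C : seq T) n i :
  n <= size C -> i < size C ->
  nth x0 (rot n C) i = nth x0 C ((n + i) %% size C).
Proof.
move=> Hn Hi; rewrite /rot nth_cat size_drop.
case: (ltnP i (size C - n)) => H.
  rewrite nth_drop modn_small //. lia.
rewrite nth_take; last lia.
have -> : (n + i) %% size C = i - (size C - n).
  have -> : n + i = (i - (size C - n)) + size C by lia.
  by rewrite modnDr modn_small //; lia.
by [].
Qed.

Lemma pick_n (S : nat -> bool) :
  (forall j, S j -> ~~ S (j + 3)) -> exists n, [/\ n <= 6, ~~ S n & ~~ S (n + 4)].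
Proof.
move=> D.
have key : forall a b, a + 3 = b -> S b -> ~~ S a.
  by move=> a b <- Hb; apply/negP => /D; rewrite Hb.
suff H : forall j0, ~~ S j0 -> exists n, [/\ n <= j0 + 3, ~~ S n & ~~ S (n + 4)].
  case H0 : (S 0).
    have [n [Hn H1 H2]] := H 3 (D 0 H0); exists n; split => //; try lia.
  have [n [Hn H1 H2]] := H 0 (negbT H0); exists n; split => //; try lia.
move=> j0 Hj0.
case: (boolP (S (j0 + 4))) => H4; last by exists j0; split => //; try lia.
have H1 := key (j0 + 1) (j0 + 4) (ltac:(rewrite -addnA; done)) H4.
case: (boolP (S (j0 + 5))) => H5.
  have H2 := key (j0 + 2) (j0 + 5) (ltac:(rewrite -addnA; done)) H5.
  case: (boolP (S (j0 + 6))) => H6.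
    have H3 := key (j0 + 3) (j0 + 6) (ltac:(rewrite -addnA; done)) H6.
    exists (j0 + 3); split => //; first try lia.
    have E : j0 + 3 + 4 = j0 + 4 + 3 by lia.
    by rewrite E; apply: D.
  exists (j0 + 2); split => //; first lia.
  by have -> : j0 + 2 + 4 = j0 + 6 by lia.
exists (j0 + 1); split => //; first lia.
by have -> : j0 + 1 + 4 = j0 + 5 by lia.
Qed.
Unset Implicit Arguments.

Theorem mainTheorem6 (T : finType) (e : rel T)
  (Hsimple : simple_graph e) (Hcubic : cubic e) (Hbip : bipartite e)
  (C : seq T) (HCuniq : uniq C) (HCcycle : cycle e C) (Ht : 6 <= size C) :
  exists P : {set {set T}},
    [/\ partition P [set x in C],
        3 * #|P| <= size C &
        forall W, W \in P -> 2 <= #|W| /\ induced_path e W].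
Proof.
have [Hsym Hirr] := Hsimple.
have [c Hc] := Hbip.
have [x0 _] : exists x : T, true by case: C Ht {HCuniq HCcycle} => [|x C'] //; exists x.
set t := size C.
have Ht0 : 0 < t by lia.
pose v j := nth x0 C (j %% t).
have E1 : forall j, e (v j) (v j.+1).
  move=> j; have := cycle_nth x0 HCcycle (ltn_pmod j Ht0).
  by rewrite -/t -addn1 modnDml addn1.
have Col : forall n i, c (v (n + i)) = c (v n) (+) odd i.
  move=> n; elim => [|i IH]; first by rewrite addn0 addbF.
  have := Hc _ _ (E1 (n + i)); rewrite IH addnS /=.
  by case: (c (v n)); case: (odd i); case: (c (v (n + i).+1)).
have Par : forall k, e (v k) (v (k + 2)) = false.
  move=> k; apply/negbTE/negP => H; have := Hc _ _ H.
  by rewrite (Col k 2) /= addbF eqxx.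
have ND : forall j a b, a < t -> b < t -> a != b -> (v (j + a) == v (j + b)) = false.
  move=> j a b Ha Hb Hab; rewrite /v nth_uniq ?ltn_pmod //.
  by rewrite eqn_modDl !modn_small //; apply/negbTE.
pose S j := e (v j) (v (j + 3)).
have D : 7 <= t -> forall j, S j -> ~~ S (j + 3).
  move=> H7 j Sj; apply/negP => Sj3.
  pose N := [set y | e (v (j + 3)) y].
  have HN : #|N| = 3 := Hcubic _.
  have e2 : e (v (j + 3)) (v (j + 2)).
    by rewrite Hsym -[j + 3]/(j + 2.+1) (addnS j 2); apply: E1.
  have e4 : e (v (j + 3)) (v (j + 4)).
    by rewrite -[j + 4]/(j + 3.+1) (addnS j 3); apply: E1.
  have e0 : e (v (j + 3)) (v (j + 0)) by rewrite addn0 Hsym.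
  have e6 : e (v (j + 3)) (v (j + 6)).
    by move: Sj3; rewrite /S -addnA.
  have U : uniq [:: v (j + 2); v (j + 4); v (j + 0); v (j + 6)].
    rewrite /= !inE !negb_or !ND //; lia.
  have := uniq_leq_size U (_ : {subset _ <= enum N}).
  rewrite -cardE HN /= => H; apply: (negP _ (H _)) => //.
  move=> y; rewrite mem_enum !inE => /or4P [] /eqP ->; done.
have [n [Hnt Hgood]] : exists n, n <= t /\ (0 < t %% 3 -> ~~ S n /\ ~~ S (n + 4)).
  case: (posnP (t %% 3)) => Hr.
    by exists 0; split => //; rewrite Hr.
  have H7 : 7 <= t by have := divn_eq t 3; lia.
  have [n [Hn H1 H2]] := pick_n (D H7).
  by exists n; split => //; lia.
pose s := rot n C.
have Hsz : size s = t by rewrite size_rot.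
have Us : uniq s by rewrite rot_uniq.
have Hmem : [set x in s] = [set x in C] by apply/setP => x; rewrite !inE mem_rot.
have Hnth : forall i, i < t -> nth x0 s i = v (n + i).
  by move=> i Hi; rewrite /s nth_rot_mod.
have Hedge : forall k, k.+1 < size s -> e (nth x0 s k) (nth x0 s k.+1).
  rewrite Hsz => k Hk; rewrite !Hnth; try lia.
  by rewrite addnS; apply: E1.
have Hpar : forall k, k + 2 < size s -> e (nth x0 s k) (nth x0 s (k + 2)) = false.
  rewrite Hsz => k Hk; rewrite !Hnth; try lia.
  by rewrite addnA Par.
set r := t %% 3.
set k := t %/ 3.
have Hdiv : t = k * 3 + r by apply: divn_eq.
have Hr3 : r < 3 by apply: ltn_pmod.
pose bs := chunk 4 r s ++ chunk 3 (k - r) (drop (4 * r) s).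
have Hflat : flatten bs = s.
  rewrite flatten_cat !flatten_chunk [X in _ ++ X]take_oversize ?cat_take_drop //.
  rewrite size_drop Hsz; lia.
have Hblocks : forall b, b \in bs ->
    2 <= #|[set x in b]| /\ induced_path e [set x in b].
  move=> b; rewrite mem_cat => /orP [] /mem_chunk [m Hm ->].
    apply: (segment_ok Hsym Hirr Us Hedge Hpar); rewrite ?Hsz; try lia.
    move=> _.
    have [H1 H2] := Hgood ltac:(lia).
    have [Hm0|Hm1] : m = 0 \/ m = 1 by lia.
      rewrite !Hnth; try lia.
      have -> : n + 4 * m = n by lia.
      have -> : n + (4 * m + 3) = n + 3 by lia.
      by apply/negbTE.
    rewrite !Hnth; try lia.
    have -> : n + 4 * m = n + 4 by lia.
    have -> : n + (4 * m + 3) = n + 4 + 3 by lia.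
    by apply/negbTE.
  rewrite drop_drop.
  apply: (segment_ok Hsym Hirr Us Hedge Hpar); rewrite ?Hsz; lia.
have [P [HP Hcard HW]] := blocks_partition Us Hflat Hblocks.
exists P; rewrite -Hmem; split => //.
move: Hcard; rewrite /bs size_cat !size_chunk -/t; lia.
Qed.
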